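(* Let $2\leq\alpha,\beta\leq\omega$. The class of $(\alpha,\beta)$-representable posets is closed under (arbitrary) products: if $I$ is a set and $P_i$ is an $(\alpha,\beta)$-representable poset for each $i\in I$, then the product $\prod_{i\in I}P_i$ (with the componentwise order) is $(\alpha,\beta)$-representable.
   Context: For posets $P,Q$, a monotone map $h:P\to Q$ is an $(\alpha,\beta)$-morphism if whenever $S\subseteq P$ with $|S|<\alpha$ and $\bigwedge S$ exists in $P$, then $h(\bigwedge S)=\bigwedge h[S]$, and whenever $T\subseteq P$ with $|T|<\beta$ and $\bigvee T$ exists in $P$, then $h(\bigvee T)=\bigvee h[T]$. A poset $P$ is $(\alpha,\beta)$-representable if there is a set $X$ and an $(\alpha,\beta)$-morphism $h:P\to\wp(X)$ that is an order embedding, where $\wp(X)$ is the power set of $X$ ordered by inclusion. *)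

(* Defs.v *)
From Stdlib Require Import List FunctionalExtensionality PropExtensionality.
Import ListNotations.

Set Implicit Arguments.

Record Poset := {
  carrier :> Type;
  le : carrier -> carrier -> Prop;
  le_refl : forall x, le x x;
  le_trans : forall x y z, le x y -> le y z -> le x z;
  le_antisym : forall x y, le x y -> le y x -> x = y
}.
Arguments le {p} _ _.

(** Cardinal bounds alpha with alpha <= omega: a natural number or omega. *)
Inductive card_bd := Fin (n : nat) | Omega.

Definition card_lt (n : nat) (a : card_bd) : Prop :=
  match a with Fin m => n < m | Omega => True end.

Definition two_le (a : card_bd) : Prop :=
  match a with Fin m => 2 <= m | Omega => True end.

Definition has_card_lt {T : Type} (S : T -> Prop) (a : card_bd) : Prop :=
  exists l : list T, NoDup l /\ (forall x, S x <-> In x l) /\ card_lt (length l) a.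

Definition is_glb {P : Poset} (S : P -> Prop) (m : P) : Prop :=
  (forall s, S s -> le m s) /\ (forall y, (forall s, S s -> le y s) -> le y m).

Definition is_lub {P : Poset} (S : P -> Prop) (m : P) : Prop :=
  (forall s, S s -> le s m) /\ (forall y, (forall s, S s -> le s y) -> le m y).

Definition image {A B : Type} (h : A -> B) (S : A -> Prop) : B -> Prop :=
  fun b => exists a, S a /\ h a = b.

Definition monotone {P Q : Poset} (h : P -> Q) : Prop :=
  forall x y, le x y -> le (h x) (h y).

(** (alpha,beta)-morphism: monotone, preserves all existing meets of subsets
    of size < alpha and all existing joins of subsets of size < beta.
    "h(/\ S) = /\ h[S]" means h(/\ S) is the meet of h[S] in Q. *)
Definition ab_morphism (alpha beta : card_bd) {P Q : Poset} (h : P -> Q) : Prop :=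
  monotone h /\
  (forall (S : P -> Prop) (m : P), has_card_lt S alpha -> is_glb S m ->
      is_glb (image h S) (h m)) /\
  (forall (T : P -> Prop) (j : P), has_card_lt T beta -> is_lub T j ->
      is_lub (image h T) (h j)).

Definition order_embedding {P Q : Poset} (h : P -> Q) : Prop :=
  forall x y, le x y <-> le (h x) (h y).

Definition subset {X : Type} (A B : X -> Prop) : Prop := forall x, A x -> B x.

Lemma subset_antisym {X : Type} (A B : X -> Prop) :
  subset A B -> subset B A -> A = B.
Proof.
  intros H1 H2. apply functional_extensionality; intro x.
  apply propositional_extensionality; split; auto.
Qed.

Definition powerset (X : Type) : Poset :=
  {| carrier := X -> Prop;
     le := @subset X;
     le_refl := fun A x Hx => Hx;
     le_trans := fun A B C H1 H2 x Hx => H2 x (H1 x Hx);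
     le_antisym := @subset_antisym X |}.

Definition representable (alpha beta : card_bd) (P : Poset) : Prop :=
  exists (X : Type) (h : P -> powerset X),
    ab_morphism alpha beta h /\ order_embedding h.

Definition prod_le {I : Type} (P : I -> Poset) (f g : forall i, P i) : Prop :=
  forall i, le (f i) (g i).

Lemma prod_le_antisym {I : Type} (P : I -> Poset) (f g : forall i, P i) :
  prod_le P f g -> prod_le P g f -> f = g.
Proof.
  intros H1 H2. apply functional_extensionality_dep; intro i.
  apply le_antisym; auto.
Qed.

Definition prod_poset {I : Type} (P : I -> Poset) : Poset :=
  {| carrier := forall i, P i;
     le := prod_le P;
     le_refl := fun f i => le_refl (P i) (f i);
     le_trans := fun f g h H1 H2 i => le_trans (P i) _ _ _ (H1 i) (H2 i);
     le_antisym := @prod_le_antisym I P |}.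

(* Main.v *)
Require Import Defs.
From Stdlib Require Import List Lia ClassicalEpsilon ProofIrrelevance.
Import ListNotations.

Lemma card_image {A B : Type} (f : A -> B) (S : A -> Prop) a :
  has_card_lt S a -> has_card_lt (image f S) a.
Proof.
  intros [l [Hnd [Hin Hc]]].
  pose (dec := fun x y : B => excluded_middle_informative (x = y)).
  exists (nodup dec (map f l)). split; [apply NoDup_nodup|split].
  - intro x. rewrite nodup_In, in_map_iff. unfold image. split.
    + intros [y [Hy Hf]]. exists y. split; auto. apply Hin; auto.
    + intros [y [Hf Hy]]. exists y. split; auto. apply Hin; auto.
  - assert (length (nodup dec (map f l)) <= length l).
    { rewrite <- (length_map f l). apply NoDup_incl_length. apply NoDup_nodup.
      intros x Hx. apply nodup_In in Hx. exact Hx. }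
    destruct a; simpl in *; auto. lia.
Qed.

Lemma upd (I : Type) (A : I -> Type) (m : forall j, A j) (i : I) (y : A i) :
  exists f : forall j, A j, f i = y /\ forall j, j <> i -> f j = m j.
Proof.
  exists (fun j => match excluded_middle_informative (i = j) with
                   | left e => eq_rect i A y j e | right _ => m j end).
  split.
  - destruct (excluded_middle_informative (i = i)) as [e|n].
    + rewrite (proof_irrelevance _ e eq_refl). reflexivity.
    + exfalso; auto.
  - intros j Hj. destruct (excluded_middle_informative (i = j)) as [e|n].
    + exfalso; auto.
    + reflexivity.
Qed.

Lemma proj_glb (I : Type) (P : I -> Poset) (S : prod_poset P -> Prop) (m : prod_poset P) i :
  is_glb S m -> is_glb (P := P i) (image (fun s : prod_poset P => s i) S) (m i).
Proof.
  intros [H1 H2]. split.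
  - intros x [s [Hs <-]]. apply (H1 s Hs).
  - intros y Hy. destruct (@upd I (fun j => carrier (P j)) m i y) as [f [Hfi Hfj]].
    assert (Hf : le (p := prod_poset P) f m).
    { apply H2. intros s Hs j. destruct (excluded_middle_informative (j = i)) as [e|n].
      + subst j. simpl. rewrite Hfi. apply Hy. exists s; auto.
      + simpl. rewrite (Hfj j n). apply (H1 s Hs). }
    rewrite <- Hfi. apply Hf.
Qed.

Lemma proj_lub (I : Type) (P : I -> Poset) (S : prod_poset P -> Prop) (m : prod_poset P) i :
  is_lub S m -> is_lub (P := P i) (image (fun s : prod_poset P => s i) S) (m i).
Proof.
  intros [H1 H2]. split.
  - intros x [s [Hs <-]]. apply (H1 s Hs).
  - intros y Hy. destruct (@upd I (fun j => carrier (P j)) m i y) as [f [Hfi Hfj]].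
    assert (Hf : le (p := prod_poset P) m f).
    { apply H2. intros s Hs j. destruct (excluded_middle_informative (j = i)) as [e|n].
      + subst j. simpl. rewrite Hfi. apply Hy. exists s; auto.
      + simpl. rewrite (Hfj j n). apply (H1 s Hs). }
    rewrite <- Hfi. apply Hf.
Qed.

Theorem proposition2p5 (alpha beta : card_bd) (Halpha : two_le alpha) (Hbeta : two_le beta)
  (I : Type) (P : I -> Poset) (HP : forall i, representable alpha beta (P i)) :
  representable alpha beta (prod_poset P).
Proof.
  pose (Xs := fun i => proj1_sig (constructive_indefinite_description _ (HP i))).
  pose (HX := fun i => proj2_sig (constructive_indefinite_description _ (HP i))).
  pose (hs := fun i => (proj1_sig (constructive_indefinite_description _ (HX i)) : P i -> powerset (Xs i))).
  pose (hs0 := fun i => proj1_sig (constructive_indefinite_description _ (HX i))).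
  assert (Hh : forall i, ab_morphism alpha beta (hs i) /\ order_embedding (hs i)).
  { intro i. exact (proj2_sig (constructive_indefinite_description _ (HX i))). }
  clearbody hs.
  exists (sigT Xs).
  exists (fun (f : prod_poset P) (p : sigT Xs) => hs (projT1 p) (f (projT1 p)) (projT2 p)).
  assert (Emb : order_embedding (Q := powerset (sigT Xs))
     (fun (f : prod_poset P) (p : sigT Xs) => hs (projT1 p) (f (projT1 p)) (projT2 p))).
  { intros f g. split.
    - intros Hfg [i x] Hx. simpl in *. apply ((proj2 (Hh i)) (f i) (g i)); auto.
    - intros Hfg i. apply ((proj2 (Hh i)) (f i) (g i)). intros x Hx.
      apply (Hfg (existT _ i x)). exact Hx. }
  split; [|exact Emb].
  split; [|split].
  - intros f g Hfg. apply Emb. exact Hfg.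
  - intros S m Hc Hm. split.
    + intros Y [s [Hs <-]]. apply Emb. apply (proj1 Hm s Hs).
    + intros Y HY [i x] Hx. simpl.
      destruct (proj1 (proj2 (proj1 (Hh i)))
                 _ _ (@card_image _ _ (fun s : prod_poset P => s i) _ _ Hc) (@proj_glb _ _ _ _ i Hm)) as [_ G].
      apply (G (fun x => Y (existT _ i x))); [|exact Hx].
      intros A [a [[s [Hs <-]] <-]] z Hz.
      apply (HY _ (ex_intro _ s (conj Hs eq_refl)) (existT _ i z) Hz).
  - intros S m Hc Hm. split.
    + intros Y [s [Hs <-]]. apply Emb. apply (proj1 Hm s Hs).
    + intros Y HY [i x] Hx. simpl in Hx.
      destruct (proj2 (proj2 (proj1 (Hh i)))
                 _ _ (@card_image _ _ (fun s : prod_poset P => s i) _ _ Hc) (@proj_lub _ _ _ _ i Hm)) as [_ G].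
      apply (G (fun x => Y (existT _ i x))); [|exact Hx].
      intros A [a [[s [Hs <-]] <-]] z Hz.
      apply (HY _ (ex_intro _ s (conj Hs eq_refl)) (existT _ i z) Hz).
Qed.
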